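(* If $R \subseteq \mathbb{N}$ is Turing computable and $A \subseteq \mathbb{N}$ is bi-immune, then the image set $\sigma_R(A) = \{\sigma_R(a) : a \in A\}$ is bi-immune.
   Context: $\mathbb{N}$ denotes the non-negative integers; $g \circ f$ means apply $f$ first. For $i \in \mathbb{N}$, $\sigma_{(i)}$ is the permutation of $\mathbb{N}$ swapping $i$ and $i+1$ and fixing all other numbers. For $R \subseteq \mathbb{N}$ with increasing enumeration $r_0 < r_1 < \cdots$, define $\sigma_R : \mathbb{N} \to \mathbb{N}$ by $\sigma_R(x) = \lim_{n \to \infty} (\sigma_{(r_0)} \circ \sigma_{(r_1)} \circ \cdots \circ \sigma_{(r_n)})(x)$ (eventually constant for each $x$; for finite $R$ it is the finite composition, $\sigma_\emptyset = \mathrm{id}$). A set $A$ is immune if it is infinite and contains no infinite computably enumerable subset; $A$ is bi-immune if both $A$ and $\mathbb{N} - A$ are immune. *)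

(* Defs.v *)
(* Computability via mu-recursive (partial recursive) functions. *)
From Stdlib Require Import Arith List Sorted.
Import ListNotations.

Inductive prog : Type :=
| PZero : prog
| PSucc : prog
| PProj : nat -> prog                (* i-th argument (0-based) *)
| PComp : prog -> list prog -> prog
| PRec  : prog -> prog -> prog
| PMu   : prog -> prog.

Inductive eval : prog -> list nat -> nat -> Prop :=
| ev_zero : forall args, eval PZero args 0
| ev_succ : forall x args, eval PSucc (x :: args) (S x)
| ev_proj : forall i args, i < length args -> eval (PProj i) args (nth i args 0)
| ev_comp : forall f gs args ys v,
    evals gs args ys -> eval f ys v -> eval (PComp f gs) args v
| ev_rec0 : forall g h args v, eval g args v -> eval (PRec g h) (0 :: args) v
| ev_recS : forall g h n args r v,
    eval (PRec g h) (n :: args) r -> eval h (n :: r :: args) v ->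
    eval (PRec g h) (S n :: args) v
| ev_mu : forall f args n,
    eval f (n :: args) 0 ->
    (forall m, m < n -> exists k, eval f (m :: args) (S k)) ->
    eval (PMu f) args n
with evals : list prog -> list nat -> list nat -> Prop :=
| evs_nil : forall args, evals [] args []
| evs_cons : forall g gs args y ys,
    eval g args y -> evals gs args ys -> evals (g :: gs) args (y :: ys).

Definition computable_set (R : nat -> Prop) : Prop :=
  exists p : prog, forall n : nat,
    (R n -> eval p [n] 1) /\ (~ R n -> eval p [n] 0).

Definition ce_set (W : nat -> Prop) : Prop :=
  exists p : prog, forall n : nat, W n <-> exists v, eval p [n] v.

Definition infinite_set (A : nat -> Prop) : Prop :=
  forall m : nat, exists n : nat, m <= n /\ A n.

Definition immune (A : nat -> Prop) : Prop :=
  infinite_set A /\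
  forall W : nat -> Prop, ce_set W -> (forall n, W n -> A n) -> ~ infinite_set W.

Definition bi_immune (A : nat -> Prop) : Prop :=
  immune A /\ immune (fun n => ~ A n).

Definition swap (i x : nat) : nat :=
  if Nat.eqb x i then S i else if Nat.eqb x (S i) then i else x.

Definition enum_below (R : nat -> Prop) (N : nat) (l : list nat) : Prop :=
  (forall i, In i l <-> (i < N /\ R i)) /\ StronglySorted lt l.

(** [sigmaR R x y] : sigma_R(x) = y, i.e. the compositions
    sigma_(r_0) o sigma_(r_1) o ... o sigma_(r_n) (rightmost applied first)
    applied to x are eventually constantly equal to y. Here the finite
    prefixes of the enumeration of R are taken as the lists of elements of R
    below N, N -> infinity (for finite R this becomes the full composition). *)
Definition sigmaR (R : nat -> Prop) (x y : nat) : Prop :=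
  exists N0 : nat, forall (N : nat) (l : list nat),
    N0 <= N -> enum_below R N l -> fold_right swap x l = y.

Definition sigma_image (R A : nat -> Prop) : nat -> Prop :=
  fun y => exists a, A a /\ sigmaR R a y.

(* Main.v *)
Require Import Defs.
From Stdlib Require Import Arith List Sorted Lia Classical ClassicalDescription FinFun.
Import ListNotations.

Definition prog_ind2 (P : prog -> Prop) (H0 : P PZero) (H1 : P PSucc) (H2 : forall i, P (PProj i))
  (H3 : forall f gs, P f -> Forall P gs -> P (PComp f gs))
  (H4 : forall g h, P g -> P h -> P (PRec g h))
  (H5 : forall f, P f -> P (PMu f)) : forall p, P p :=
  fix F p := match p return P p with
  | PZero => H0 | PSucc => H1 | PProj i => H2 i
  | PComp f gs => H3 f gs (F f)
      ((fix G (l : list prog) : Forall P l := match l with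
         | [] => @Forall_nil _ P
         | g :: l' => @Forall_cons _ P g l' (F g) (G l') end) gs)
  | PRec g h => H4 g h (F g) (F h)
  | PMu f => H5 f (F f)
  end.

Lemma eval_det : forall p a v v', eval p a v -> eval p a v' -> v = v'.
Proof.
  intro p; induction p using prog_ind2; intros a v v' E1 E2.
  - inversion E1; inversion E2; subst; auto.
  - inversion E1; subst; inversion E2; subst; reflexivity.
  - inversion E1; subst; inversion E2; subst; reflexivity.
  - assert (Hs : forall gs, Forall (fun p => forall a v v', eval p a v -> eval p a v' -> v = v') gs ->
       forall a ys ys', evals gs a ys -> evals gs a ys' -> ys = ys').
    { clear. intros gs HF; induction HF; intros a ys ys' E1 E2.
      - inversion E1; inversion E2; subst; auto.
      - inversion E1; subst; inversion E2; subst.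
        f_equal; [eapply H; eauto | eapply IHHF; eauto]. }
    inversion E1; subst; inversion E2; subst.
    assert (ys = ys0) by (eapply Hs; eauto). subst. eapply IHp; eauto.
  - assert (Hr : forall n args v v', eval (PRec p1 p2) (n::args) v -> eval (PRec p1 p2) (n::args) v' -> v = v').
    { intro n; induction n; intros args w w' F1 F2.
      - inversion F1; subst; inversion F2; subst. eapply IHp1; eauto.
      - inversion F1; subst; inversion F2; subst.
        assert (r = r0) by (eapply IHn; eauto). subst. eapply IHp2; eauto. }
    destruct a as [|n args]; [inversion E1|]. eapply Hr; eauto.
  - inversion E1 as [| | | | | | ? ? ? Z1 M1]; subst.
    inversion E2 as [| | | | | | ? ? ? Z2 M2]; subst.
    destruct (lt_eq_lt_dec v v') as [[lt|eq]|lt]; auto; exfalso.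
    + destruct (M2 v lt) as [k Hk]. specialize (IHp _ _ _ Z1 Hk). discriminate.
    + destruct (M1 v' lt) as [k Hk]. specialize (IHp _ _ _ Z2 Hk). discriminate.
Qed.

Definition rb (R : nat -> Prop) n : bool :=
  if excluded_middle_informative (R n) then true else false.
Lemma rb_spec R n : rb R n = true <-> R n.
Proof. unfold rb; destruct (excluded_middle_informative (R n)); split; intros; auto; try discriminate; contradiction. Qed.

Fixpoint gf R n := match n with 0 => 0 | S k => if rb R k then gf R k else S k end.
Definition sigf R x := if rb R x then S x else gf R x.

Definition Sig (P : nat -> Prop) x y :=
  (P x /\ y = S x) \/ (~ P x /\ y <= x /\ (forall z, y <= z < x -> P z) /\ (y = 0 \/ ~ P (y - 1))).

Lemma Sig_unique P P' x y y' : Sig P x y -> Sig P' x y' -> (forall i, i <= x -> (P i <-> P' i)) -> y = y'.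
Proof.
  intros H1 H2 E.
  destruct H1 as [[Px ->]|[nPx [Hle [Hz Hy]]]]; destruct H2 as [[Px' ->]|[nPx' [Hle' [Hz' Hy']]]].
  - reflexivity.
  - exfalso; apply nPx'; apply E; auto.
  - exfalso; apply nPx; apply E; auto.
  - destruct (lt_eq_lt_dec y y') as [[lt|eq]|lt]; auto; exfalso.
    + destruct Hy' as [Hy'|Hy']; [lia|]. apply Hy'. apply E; [lia|]. apply Hz; lia.
    + destruct Hy as [Hy|Hy]; [lia|]. apply Hy. apply E; [lia|]. apply Hz'; lia.
Qed.

Lemma gf_spec R x : gf R x <= x /\ (forall z, gf R x <= z < x -> R z) /\ (gf R x = 0 \/ ~ R (gf R x - 1)).
Proof.
  induction x; simpl.
  - split; [lia | split; [intros; lia| left; auto]].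
  - destruct (rb R x) eqn:E.
    + apply rb_spec in E. destruct IHx as [h1 [h2 h3]]. split; [lia|split; [|exact h3]].
      intros z Hz. destruct (Nat.eq_dec z x); [subst; auto| apply h2; lia].
    + split; [lia|split;[intros; lia|right]]. replace (S x - 1) with x by lia.
      intro Hr; apply rb_spec in Hr; congruence.
Qed.

Lemma sig_Sig R x : Sig R x (sigf R x).
Proof.
  unfold sigf; destruct (rb R x) eqn:E.
  - left; split; [apply rb_spec; auto | auto].
  - right. split; [intro Hr; apply rb_spec in Hr; congruence|]. apply gf_spec.
Qed.

Lemma fold_Sig l x : StronglySorted lt l -> Sig (fun i => In i l) x (fold_right swap x l).
Proof.
  induction l as [|r l IH]; intro HS.
  - simpl. right. split; [auto|]. split; [lia|]. split; [intros; lia|]. right; simpl; tauto.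
  - inversion HS as [|? ? HS' HF]; subst. specialize (IH HS'). simpl fold_right.
    set (y := fold_right swap x l) in *. rewrite Forall_forall in HF.
    destruct IH as [[Hx Hy]|[nHx [Hle [Hz Hy]]]].
    + pose proof (HF x Hx). left. split; [simpl; right; auto|]. rewrite Hy. unfold swap.
      destruct (Nat.eqb_spec (S x) r); [lia|]. destruct (Nat.eqb_spec (S x) (S r)); [lia|]. reflexivity.
    + destruct (lt_eq_lt_dec x r) as [[lt|eq]|gt].
      * assert (Hyx : y = x).
        { destruct (Nat.eq_dec y x); auto. exfalso. specialize (HF y (Hz y ltac:(lia))). lia. }
        right. rewrite Hyx. unfold swap. destruct (Nat.eqb_spec x r); [lia|].
        destruct (Nat.eqb_spec x (S r)); [lia|].
        split; [simpl; intros [H|H]; [lia| auto]|]. split; [lia|]. split; [intros; lia|].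
        destruct x; [left; auto| right]. replace (S x - 1) with x by lia.
        simpl. intros [H|H]; [lia|]. apply HF in H. lia.
      * subst r. assert (Hyx : y = x).
        { destruct (Nat.eq_dec y x); auto. exfalso. specialize (HF y (Hz y ltac:(lia))). lia. }
        left. split; [left; auto|]. rewrite Hyx; unfold swap; rewrite Nat.eqb_refl; reflexivity.
      * assert (Hyr : r < y). { destruct (Nat.eq_dec y x); [lia|]. apply HF, Hz; lia. }
        right. unfold swap. destruct (Nat.eqb_spec y r); [lia|]. destruct (Nat.eqb_spec y (S r)).
        -- split; [simpl; intros [H|H]; [lia|auto]|]. split; [lia|]. split.
           ++ intros z Hz'. simpl. destruct (Nat.eq_dec r z); [left; auto| right; apply Hz; lia].
           ++ destruct r; [left; auto|right]. simpl; intros [H|H]; [lia|]. apply HF in H; lia.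
        -- split; [simpl; intros [H|H]; [lia|auto]|]. split; [auto|].
           split; [intros; simpl; right; apply Hz; auto|].
           destruct Hy as [Hy|Hy]; [lia| right]. simpl. intros [H|H]; [lia | auto].
Qed.

Lemma enum_fold R N l x : x < N -> enum_below R N l -> fold_right swap x l = sigf R x.
Proof.
  intros Hx [Hin HS]. eapply Sig_unique. apply fold_Sig, HS. apply sig_Sig.
  intros i Hi. rewrite Hin. split; [tauto | intros; split; [lia|auto]].
Qed.

Lemma ss_filter_seq R : forall n s, StronglySorted lt (filter (rb R) (seq s n)).
Proof.
  induction n; intros s; simpl. constructor.
  destruct (rb R s). constructor. apply IHn. apply Forall_forall. intros z Hz.
  apply filter_In in Hz. destruct Hz as [Hz _]. apply in_seq in Hz. lia. apply IHn.
Qed.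

Lemma enum_exists R N : exists l, enum_below R N l.
Proof.
  exists (filter (rb R) (seq 0 N)). split.
  - intro i. rewrite filter_In, in_seq, rb_spec. split; intros [? ?]; split; auto; lia.
  - apply ss_filter_seq.
Qed.

Lemma sigmaR_iff R a y : sigmaR R a y <-> y = sigf R a.
Proof.
  split.
  - intros [N0 H]. destruct (enum_exists R (N0 + S a)) as [l Hl].
    rewrite <- (H (N0 + S a) l ltac:(lia) Hl). apply enum_fold with (N := N0 + S a); [lia|auto].
  - intros ->. exists (S a). intros N l HN Hl. apply enum_fold with N; [lia|auto].
Qed.

Lemma swap_inj i x x' : swap i x = swap i x' -> x = x'.
Proof.
  unfold swap; destruct (Nat.eqb_spec x i), (Nat.eqb_spec x (S i)), (Nat.eqb_spec x' i), (Nat.eqb_spec x' (S i)); lia.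
Qed.

Lemma fold_inj l x x' : fold_right swap x l = fold_right swap x' l -> x = x'.
Proof. induction l; simpl; auto. intros H; apply IHl; apply swap_inj in H; auto. Qed.

Lemma sig_inj R x x' : sigf R x = sigf R x' -> x = x'.
Proof.
  intro H. destruct (enum_exists R (S (x + x'))) as [l Hl].
  rewrite <- (enum_fold R (S (x + x')) l x), <- (enum_fold R (S (x+x')) l x') in H; try lia; auto.
  apply fold_inj in H; auto.
Qed.

Lemma find_nonR R d w : ~ R (w + d) -> exists e, w <= e /\ ~ R e /\ forall z, w <= z < e -> R z.
Proof.
  revert w; induction d; intros w H.
  - exists w; rewrite Nat.add_0_r in H; split; [lia|split; [auto| intros; lia]].
  - destruct (classic (R w)) as [Rw|nRw].
    + destruct (IHd (S w)) as [e [h1 [h2 h3]]].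
      { replace (S w + d) with (w + S d) by lia; auto. }
      exists e. split; [lia|split; [auto|]].
      intros z Hz; destruct (Nat.eq_dec z w); [subst; auto| apply h3; lia].
    + exists w. split; [lia|split; [auto|intros; lia]].
Qed.

Lemma gf_run R w e : (w = 0 \/ ~ R (w-1)) -> w <= e -> (forall z, w <= z < e -> R z) -> gf R e = w.
Proof.
  intros Hw; induction e; intros Hle Hz.
  - assert (w = 0) by lia; subst; reflexivity.
  - simpl. destruct (Nat.eq_dec w (S e)).
    + subst w. destruct Hw as [Hw|Hw]; [lia|].
      destruct (rb R e) eqn:E; [|reflexivity].
      apply rb_spec in E; exfalso; apply Hw; replace (S e - 1) with e by lia; auto.
    + assert (HR : R e) by (apply Hz; lia). apply rb_spec in HR; rewrite HR.
      apply IHe; [lia| intros; apply Hz; lia].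
Qed.

Lemma hit R w : (exists x, sigf R x = w) \/ ((w = 0 \/ ~ R (w-1)) /\ forall z, w <= z -> R z).
Proof.
  destruct (classic (w <> 0 /\ R (w-1))) as [[h1 h2]|h].
  - left; exists (w-1); unfold sigf; rewrite (proj2 (rb_spec R (w-1)) h2); lia.
  - assert (Hw : w = 0 \/ ~R (w-1)).
    { apply not_and_or in h; destruct h; [left; lia | right; auto]. }
    destruct (classic (forall z, w <= z -> R z)) as [Hall|Hn]; [right; auto|left].
    apply not_all_ex_not in Hn; destruct Hn as [z Hz]. apply imply_to_and in Hz.
    destruct Hz as [Hwz nRz].
    destruct (find_nonR R (z - w) w) as [e [h1 [h2 h3]]].
    { replace (w + (z-w)) with z by lia; auto. }
    exists e. unfold sigf. destruct (rb R e) eqn:E.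
    + apply rb_spec in E; contradiction.
    + apply gf_run; auto.
Qed.

Lemma eval_p R p n : (forall n, (R n -> eval p [n] 1) /\ (~R n -> eval p [n] 0)) ->
  eval p [n] (if rb R n then 1 else 0).
Proof.
  intros H. destruct (rb R n) eqn:E.
  - apply H; apply rb_spec; auto.
  - apply H; intro Hr; apply rb_spec in Hr; congruence.
Qed.

Definition cond := PRec (PProj 1) (PProj 2).
Lemma ev_proj' i args v : i < length args -> nth i args 0 = v -> eval (PProj i) args v.
Proof. intros; subst; constructor; auto. Qed.

Lemma cond_ev (b:bool) a c : eval cond [if b then 1 else 0; a; c] (if b then a else c).
Proof.
  destruct b; unfold cond.
  - apply ev_recS with (r := c). apply ev_rec0. apply ev_proj'; simpl; [lia|reflexivity].
    apply ev_proj'; simpl; [lia|reflexivity].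
  - apply ev_rec0. apply ev_proj'; simpl; [lia|reflexivity].
Qed.

Definition chi0 p := PComp p [PProj 0].
Lemma chi0_ev R p n rest : (forall n, (R n -> eval p [n] 1) /\ (~R n -> eval p [n] 0)) ->
  eval (chi0 p) (n :: rest) (if rb R n then 1 else 0).
Proof.
  intro Hp. unfold chi0. apply ev_comp with (ys := [n]).
  - constructor; [apply ev_proj'; simpl; [lia|reflexivity]| constructor].
  - apply eval_p; auto.
Qed.

Lemma succ0_ev n rest : eval (PComp PSucc [PProj 0]) (n :: rest) (S n).
Proof.
  apply ev_comp with (ys := [n]).
  - constructor; [apply ev_proj'; simpl; [lia|reflexivity]| constructor].
  - constructor.
Qed.

Definition gH p := PComp cond [chi0 p; PProj 1; PComp PSucc [PProj 0]].
Definition gprog p := PRec PZero (gH p).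

Lemma gprog_ev R p x : (forall n, (R n -> eval p [n] 1) /\ (~R n -> eval p [n] 0)) ->
  eval (gprog p) [x] (gf R x).
Proof.
  intro Hp. induction x.
  - apply ev_rec0. constructor.
  - apply ev_recS with (r := gf R x); auto. unfold gH.
    apply ev_comp with (ys := [if rb R x then 1 else 0; gf R x; S x]).
    + constructor; [apply chi0_ev; auto|].
      constructor; [apply ev_proj'; simpl; [lia|reflexivity]|].
      constructor; [apply succ0_ev|constructor].
    + change (gf R (S x)) with (if rb R x then gf R x else S x). apply cond_ev.
Qed.

Definition qprog p := PComp cond [chi0 p; PComp PSucc [PProj 0]; PComp (gprog p) [PProj 0]].

Lemma q_ev R p x : (forall n, (R n -> eval p [n] 1) /\ (~R n -> eval p [n] 0)) ->
  eval (qprog p) [x] (sigf R x).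
Proof.
  intro Hp. apply ev_comp with (ys := [if rb R x then 1 else 0; S x; gf R x]).
  - constructor; [apply chi0_ev; auto|].
    constructor; [apply succ0_ev|].
    constructor; [|constructor].
    apply ev_comp with (ys := [x]).
    + constructor; [apply ev_proj'; simpl; [lia|reflexivity]| constructor].
    + apply gprog_ev; auto.
  - unfold sigf. apply cond_ev.
Qed.

Lemma ce_pre R W : computable_set R -> ce_set W -> ce_set (fun x => W (sigf R x)).
Proof.
  intros [p Hp] [pw Hw]. exists (PComp pw [qprog p]). intro n. rewrite Hw. split.
  - intros [v Hv]. exists v. apply ev_comp with (ys := [sigf R n]).
    + constructor; [apply q_ev; auto| constructor].
    + auto.
  - intros [v Hv]. inversion Hv as [| | | ? ? ? ys ? Hgs Hf | | |]; subst.
    inversion Hgs as [|? ? ? y ys' Hq Hnil]; subst.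
    inversion Hnil; subst.
    rewrite (eval_det _ _ _ _ Hq (q_ev R p n Hp)) in Hf. eauto.
Qed.

Lemma list_distinct (D : nat -> Prop) k : infinite_set D ->
  exists l, NoDup l /\ length l = k /\ forall x, In x l -> D x.
Proof.
  intro HD. induction k.
  - exists []. split; [constructor|split; [auto|intros x []]].
  - destruct IHk as [l [h1 [h2 h3]]].
    destruct (HD (S (list_max l))) as [n [hn Dn]].
    exists (n :: l). split; [|split; [simpl; auto|]].
    + constructor; auto. intro Hin.
      assert (Hm : Forall (fun k => k <= list_max l) l) by (apply list_max_le; lia).
      rewrite Forall_forall in Hm. specialize (Hm n Hin). lia.
    + intros x [->|Hx]; auto.
Qed.

Lemma inf_image f D : (forall x y, f x = f y -> x = y) -> infinite_set D ->
  infinite_set (fun y => exists a, D a /\ f a = y).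
Proof.
  intros Hinj HD m. apply NNPP; intro Hc.
  destruct (list_distinct D (S m) HD) as [l [Hnd [Hlen Hin]]].
  assert (H : NoDup (map f l)) by (apply FinFun.Injective_map_NoDup; auto).
  assert (H0 : incl (map f l) (seq 0 m)).
  { intros y Hy. apply in_map_iff in Hy as [x [<- Hx]]. apply in_seq.
    destruct (le_lt_dec m (f x)); [exfalso; apply Hc; exists (f x); split; [auto| exists x; auto] | lia]. }
  pose proof (NoDup_incl_length H H0) as H1. rewrite length_map, length_seq in H1. lia.
Qed.

Lemma bound (f : nat -> nat) m : exists M, forall i, i < m -> f i < M.
Proof.
  induction m. exists 0; lia. destruct IHm as [M HM]. exists (M + f m + 1). intros i Hi.
  destruct (Nat.eq_dec i m); [subst; lia| specialize (HM i ltac:(lia)); lia].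
Qed.

Lemma pre_inf f (W : nat -> Prop) :
  (forall w1 w2, w1 < w2 -> (exists x, f x = w1) \/ (exists x, f x = w2)) ->
  infinite_set W -> infinite_set (fun x => W (f x)).
Proof.
  intros Hhit HW m. destruct (bound f m) as [M HM].
  destruct (HW M) as [w1 [h1 W1]]. destruct (HW (S w1)) as [w2 [h2 W2]].
  destruct (Hhit w1 w2 ltac:(lia)) as [[x Hx]|[x Hx]]; exists x;
   (split; [destruct (le_lt_dec m x) as [l|l]; [auto| specialize (HM x l); lia] | rewrite Hx; auto]).
Qed.

Lemma imm_img f A : (forall x y, f x = f y -> x = y) ->
  (forall w1 w2, w1 < w2 -> (exists x, f x = w1) \/ (exists x, f x = w2)) ->
  (forall W, ce_set W -> ce_set (fun x => W (f x))) ->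
  immune A -> immune (fun y => exists a, A a /\ f a = y).
Proof.
  intros Hinj Hhit Hce [HA HAW]. split.
  - apply inf_image; auto.
  - intros W HW Hsub HWinf. apply (HAW (fun x => W (f x))); [apply Hce; auto| | apply pre_inf; auto].
    intros n Hn. destruct (Hsub _ Hn) as [a [Ha Hfa]]. apply Hinj in Hfa; subst; auto.
Qed.

Lemma imm_compl f A : (forall x y, f x = f y -> x = y) ->
  (forall w1 w2, w1 < w2 -> (exists x, f x = w1) \/ (exists x, f x = w2)) ->
  (forall W, ce_set W -> ce_set (fun x => W (f x))) ->
  immune (fun n => ~ A n) -> immune (fun y => ~ exists a, A a /\ f a = y).
Proof.
  intros Hinj Hhit Hce [HA HAW]. split.
  - intros m. destruct (inf_image f _ Hinj HA m) as [y [Hy [a [Ha Hfa]]]].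
    exists y; split; auto. intros [a' [Ha' Hfa']]. apply Ha.
    rewrite <- Hfa in Hfa'; apply Hinj in Hfa'; subst; auto.
  - intros W HW Hsub HWinf. apply (HAW (fun x => W (f x))); [apply Hce; auto| | apply pre_inf; auto].
    intros n Hn Han. apply (Hsub _ Hn). exists n; auto.
Qed.

Lemma immune_ext (P Q : nat -> Prop) : (forall y, P y <-> Q y) -> immune P -> immune Q.
Proof.
  intros E [Hi Hw]; split.
  - intros m; destruct (Hi m) as [n [h1 h2]]; exists n; split; auto; apply E; auto.
  - intros W HW Hs. apply Hw; auto. intros n Hn; apply E; auto.
Qed.

Theorem mainTheorem11 (R A : nat -> Prop) :
  computable_set R -> bi_immune A -> bi_immune (sigma_image R A).
Proof.
  intros HR [HA HAc].
  assert (Heq : forall y, sigma_image R A y <-> exists a, A a /\ sigf R a = y).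
  { unfold sigma_image; intro y; split; intros [a [Ha H]]; exists a; split; auto;
      [symmetry; apply sigmaR_iff; auto| apply sigmaR_iff; auto]. }
  assert (Hinj : forall x y, sigf R x = sigf R y -> x = y) by apply sig_inj.
  assert (Hhit : forall w1 w2, w1 < w2 -> (exists x, sigf R x = w1) \/ (exists x, sigf R x = w2)).
  { intros w1 w2 Hlt. destruct (hit R w1) as [H1|[H1a H1b]]; [left; auto|].
    destruct (hit R w2) as [H2|[H2a H2b]]; [right; auto|]. exfalso.
    destruct H2a as [H2a|H2a]; [lia|]. apply H2a, H1b; lia. }
  assert (Hce : forall W, ce_set W -> ce_set (fun x => W (sigf R x))) by (intros; apply ce_pre; auto).
  split.
  - apply immune_ext with (fun y => exists a, A a /\ sigf R a = y).
    + intro; rewrite Heq; tauto.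
    + apply imm_img; auto.
  - apply immune_ext with (fun y => ~ exists a, A a /\ sigf R a = y).
    + intros y; rewrite Heq; tauto.
    + apply imm_compl; auto.
Qed.
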